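(* Let $n\ge3$, $m=n-1$, $A_1=E_1$, $A_i=E_i+E_{i-1,n}$ for $i=2,\dots,n-1$. Let $i\in\{1,\dots,m-1\}$ and let $(Y_1,\dots,Y_i)$ be a strict facial reduction sequence for $\mathcal S^n_+$ all of whose members lie in $\operatorname{lin}\{A_1,\dots,A_m\}$. Then $$\mathcal S^n_+\cap Y_1^\perp\cap\dots\cap Y_i^\perp=0_i\oplus\mathcal S^{n-i}_+ .$$
   Context: $E_{ij}\in\mathcal S^n$ has only nonzero entries $1$ in positions $(i,j),(j,i)$; $E_i:=E_{ii}$; orthogonality is with respect to $S\bullet T=\operatorname{trace}(ST)$. For a closed convex cone $K$, $K^*=\{y:\langle y,x\rangle\ge0\ \forall x\in K\}$. A facial reduction sequence for $K$ is $(y_1,\dots,y_k)$ such that, with $F_0=K$ and $F_j=F_{j-1}\cap y_j^\perp$, one has $y_j\in F_{j-1}^*$ for all $j$; it is strict if moreover $y_j\in F_{j-1}^*\setminus F_{j-1}^\perp$ for all $j$. $0_i\oplus\mathcal S^{n-i}_+$ denotes matrices whose first $i$ rows and columns are zero and whose lower right $(n-i)\times(n-i)$ block is positive semidefinite. *)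

(* Defs.v *)
From HB Require Import structures.
From mathcomp Require Import all_boot all_order all_algebra.
Set Implicit Arguments. Unset Strict Implicit. Unset Printing Implicit Defensive.
Import Order.TTheory GRing.Theory Num.Theory.
Local Open Scope ring_scope.

Section Defs.
Variable R : rcfType.

Definition symmx n (A : 'M[R]_n) : Prop := A^T = A.

Definition psd n (A : 'M[R]_n) : Prop :=
  symmx A /\ forall x : 'cV[R]_n, 0 <= (x^T *m A *m x) 0 0.

Definition frob n (S T : 'M[R]_n) : R := \tr (S *m T).

Definition dual_cone n (K : 'M[R]_n -> Prop) (y : 'M[R]_n) : Prop :=
  symmx y /\ forall x, K x -> 0 <= frob y x.
Definition perp_cone n (K : 'M[R]_n -> Prop) (y : 'M[R]_n) : Prop :=
  symmx y /\ forall x, K x -> frob y x = 0.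

Definition cap_perp n (K : 'M[R]_n -> Prop) (y : 'M[R]_n) : 'M[R]_n -> Prop :=
  fun x => K x /\ frob y x = 0.

Fixpoint strict_fr_seq n (K : 'M[R]_n -> Prop) (ys : seq 'M[R]_n) : Prop :=
  match ys with
  | [::] => True
  | y :: ys' => dual_cone K y /\ ~ perp_cone K y /\ strict_fr_seq (cap_perp K y) ys'
  end.

Fixpoint fr_face n (K : 'M[R]_n -> Prop) (ys : seq 'M[R]_n) : 'M[R]_n -> Prop :=
  match ys with
  | [::] => K
  | y :: ys' => fr_face (cap_perp K y) ys'
  end.

(* E_{ij} with 0-based indices: entries 1 at (i,j) and (j,i); E_{ii} = E_i *)
Definition Emx n (i j : nat) : 'M[R]_n :=
  \matrix_(k, l) ((((k : nat) == i) && ((l : nat) == j))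
                  || (((k : nat) == j) && ((l : nat) == i)))%:R.

(* A_{k+1} of the paper, 0-based k = 0..n-2:
   A_1 = E_1, A_{k+1} = E_{k+1} + E_{k,n} (1-based) *)
Definition Amx n (k : nat) : 'M[R]_n :=
  if k == 0%N then Emx n 0 0 else Emx n k k + Emx n k.-1 n.-1.

Definition in_linA n (Y : 'M[R]_n) : Prop :=
  exists c : 'I_(n.-1) -> R, Y = \sum_(k < n.-1) c k *: Amx n k.

End Defs.

Lemma shift_ord_proof n i (k : 'I_(n - i)) : (k + i < n)%N.
Proof. by rewrite addnC -ltn_subRL. Qed.

Definition shift_ord n i (k : 'I_(n - i)) : 'I_n := Ordinal (shift_ord_proof k).

Definition zero_oplus_psd (R : rcfType) n (i : nat) (X : 'M[R]_n) : Prop :=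
  (forall k l : 'I_n, ((k < i)%N || (l < i)%N) -> X k l = 0) /\
  psd (mxsub (@shift_ord n i) (@shift_ord n i) X).

(* Main.v *)
Require Import Defs.
From HB Require Import structures.
From mathcomp Require Import all_boot all_order all_algebra.
From mathcomp Require Import zify ring lra.
Set Implicit Arguments. Unset Strict Implicit. Unset Printing Implicit Defensive.
Import Order.TTheory GRing.Theory Num.Theory.
Local Open Scope ring_scope.

Section S.
Variable R : rcfType.
Variable N : nat.
Implicit Types M X Y : 'M[R]_N.

Definition ev (a : 'I_N) : 'cV[R]_N := delta_mx a 0.

Lemma mxaddE m n (A B : 'M[R]_(m,n)) i j : (A + B) i j = A i j + B i j.
Proof. by rewrite mxE. Qed.
Lemma mxscaleE m n (c : R) (A : 'M[R]_(m,n)) i j : (c *: A) i j = c * A i j.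
Proof. by rewrite mxE. Qed.

Lemma qdelta (a b : 'I_N) M : ((ev a)^T *m M *m ev b) 0 0 = M a b.
Proof. by rewrite /ev trmx_delta -rowE -colE !mxE. Qed.

Lemma qlin (a b : 'I_N) (al : R) M :
  ((al *: ev a + ev b)^T *m M *m (al *: ev a + ev b)) 0 0 =
  al ^+ 2 * M a a + al * (M a b + M b a) + M b b.
Proof.
rewrite (_ : (al *: ev a + ev b)^T = al *: (ev a)^T + (ev b)^T); last first.
  by apply/matrixP=> i j; rewrite !mxE.
rewrite !mulmxDl !mulmxDr -!scalemxAl -!scalemxAr.
rewrite !mxaddE !mxscaleE !qdelta. ring.
Qed.

Lemma frobE M X : frob M X = \sum_a \sum_b M a b * X b a.
Proof. by rewrite /frob /mxtrace; apply: eq_bigr => a _; rewrite mxE. Qed.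

Lemma frob_sum (I : finType) (c : I -> R) (A : I -> 'M[R]_N) X :
  frob (\sum_k c k *: A k) X = \sum_k c k * frob (A k) X.
Proof.
rewrite /frob mulmx_suml raddf_sum; apply: eq_bigr => k _. by rewrite -scalemxAl -mxtraceZ.
Qed.

Lemma frob_rank1 M (u : 'cV[R]_N) : frob M (u *m u^T) = (u^T *m M *m u) 0 0.
Proof.
by rewrite /frob mulmxA mxtrace_mulC mulmxA /mxtrace big_ord1.
Qed.

Lemma sum_delta (T : finType) (a : T) (F : T -> R) :
  \sum_k (k == a)%:R * F k = F a.
Proof.
rewrite (bigD1 a) //= eqxx mul1r big1 ?addr0 // => k /negbTE ->; by rewrite mul0r.
Qed.

Lemma frob_delta (a b : 'I_N) X : frob (delta_mx a b) X = X b a.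
Proof.
rewrite frobE -(sum_delta a (fun k => X b k)); apply: eq_bigr => k _.
rewrite -(sum_delta b (fun l => X l k)) big_distrr /=; apply: eq_bigr => l _.
by rewrite mxE; case: (k == a); case: (l == b); rewrite /= ?mul1r ?mul0r.
Qed.

Ltac boolcases :=
  repeat match goal with
  | |- context [?x == ?y] =>
      let H := fresh "H" in case: (x =P y) => H; [try subst x; try subst y; rewrite ?eqxx|]
  end.

Lemma EmxE (a b : 'I_N) : Emx R N a b = delta_mx a b + (a != b)%:R *: delta_mx b a.
Proof.
apply/matrixP => k l; rewrite !mxE !val_eqE.
boolcases; rewrite /= ?mulr0 ?mulr1 ?addr0 ?add0r //.
Qed.

Lemma mul1E m p (u : 'M[R]_(m,1)) (v : 'M[R]_(1,p)) k l : (u *m v) k l = u k 0 * v 0 l.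
Proof. by rewrite mxE big_ord_recl big_ord0 addr0. Qed.

Definition Zq (j : nat) X := (forall k l : 'I_N, ((k < j)%N || (l < j)%N) -> X k l = 0) /\ psd X.

Definition vanish (j : nat) (u : 'cV[R]_N) := forall a : 'I_N, (a < j)%N -> u a 0 = 0.

Lemma Zq_rank1 j u : vanish j u -> Zq j (u *m u^T).
Proof.
move=> hu; split.
  move=> k l /orP [] h; rewrite mul1E mxE.
    by rewrite hu // mul0r.
  by rewrite (hu l) // mulr0.
split; first by rewrite /symmx trmx_mul trmxK.
move=> x; rewrite !mulmxA -mulmxA mul1E.
have -> : (x^T *m u) 0 0 = (u^T *m x) 0 0.
  by rewrite -[x^T *m u]trmxK trmx_mul trmxK mxE.
by rewrite -expr2 sqr_ge0.
Qed.

Lemma qform_zero M j (p m : 'I_N) : M^T = M ->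
  (forall u, vanish j u -> 0 <= (u^T *m M *m u) 0 0) ->
  (j <= p)%N -> (j <= m)%N -> M p p = 0 -> M p m = 0.
Proof.
move=> sym hq hp hm hpp.
have Mmp : M m p = M p m by rewrite -{1}sym mxE.
case: (M p m =P 0) => // hne.
have hv : forall al, vanish j (al *: ev p + ev m).
  move=> al a ha; rewrite !mxE.
  have -> : (a == p) = false by apply/negbTE/eqP => e; move: ha; rewrite e; lia.
  have -> : (a == m) = false by apply/negbTE/eqP => e; move: ha; rewrite e; lia.
  by rewrite /= mulr0 addr0.
set al := - (`|M m m| + 1) / (2 * M p m).
have := hq _ (hv al); rewrite qlin hpp Mmp mulr0 add0r.
have -> : al * (M p m + M p m) = - (`|M m m| + 1).
  by rewrite /al; field; apply/eqP.
have := ler_norm (M m m); lra.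
Qed.

Section Shift.
Variable j : nat.
Definition Pm : 'M[R]_(N, N - j) := \matrix_(a, b) (a == shift_ord b)%:R.

Lemma shift_eq (a b : 'I_(N - j)) : (shift_ord a == shift_ord b) = (a == b).
Proof. by rewrite -!val_eqE /= eqn_add2r. Qed.

Lemma PtXP X : mxsub (@shift_ord N j) (@shift_ord N j) X = Pm^T *m X *m Pm.
Proof.
apply/matrixP => k l; rewrite !mxE.
under eq_bigr => b _ do rewrite !mxE.
under eq_bigr => b _ do under eq_bigr => a _ do rewrite !mxE.
under eq_bigr => b _ do rewrite (sum_delta (shift_ord k) (fun a => X a b)).
by under eq_bigr => b _ do rewrite mulrC; rewrite sum_delta.
Qed.

Lemma PSPt X : (forall k l : 'I_N, ((k < j)%N || (l < j)%N) -> X k l = 0) ->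
  X = Pm *m mxsub (@shift_ord N j) (@shift_ord N j) X *m Pm^T.
Proof.
move=> hz; apply/matrixP => a b; rewrite !mxE.
under eq_bigr => b' _ do rewrite !mxE.
under eq_bigr => b' _ do under eq_bigr => a' _ do rewrite !mxE.
case: (ltnP a j) => ha.
  rewrite hz ?ha //; symmetry; apply: big1 => b' _; rewrite big1 ?mul0r // => a' _.
  have -> : (a == shift_ord a') = false.
    by apply/negbTE/eqP => e; move: ha; rewrite e /=; lia.
  by rewrite mul0r.
case: (ltnP b j) => hb.
  rewrite hz ?hb ?orbT //; symmetry; apply: big1 => b' _.
  have -> : (b == shift_ord b') = false.
    by apply/negbTE/eqP => e; move: hb; rewrite e /=; lia.
  by rewrite mulr0.
have := ltn_ord a; have := ltn_ord b => hbN haN.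
have ha' : (a - j < N - j)%N by lia.
have hb' : (b - j < N - j)%N by lia.
have -> : a = shift_ord (Ordinal ha') by apply/val_inj => /=; lia.
have -> : b = shift_ord (Ordinal hb') by apply/val_inj => /=; lia.
under eq_bigr => b' _ do under eq_bigr => a' _ do rewrite shift_eq eq_sym.
under eq_bigr => b' _ do rewrite (sum_delta (Ordinal ha') (fun a' => X (shift_ord a') (shift_ord b'))).
under eq_bigr => b' _ do rewrite shift_eq eq_sym mulrC.
by rewrite sum_delta.
Qed.
End Shift.

Lemma Zq_equiv j X : Zq j X <-> zero_oplus_psd j X.
Proof.
split.
  move=> [hz [hs hq]]; split => //; split.
    apply/matrixP => k l; move/matrixP: hs => hs; by rewrite !mxE -hs mxE.
  move=> x; rewrite PtXP.
  have -> : x^T *m ((@Pm j)^T *m X *m (@Pm j)) *m x = ((@Pm j) *m x)^T *m X *m ((@Pm j) *m x).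
    by rewrite trmx_mul !mulmxA.
  exact: hq.
move=> [hz [hs hq]]; split => //.
have E := PSPt hz.
split.
  by rewrite /symmx E !trmx_mul trmxK hs mulmxA.
move=> x; rewrite E.
have -> : x^T *m ((@Pm j) *m mxsub (@shift_ord N j) (@shift_ord N j) X *m ((@Pm j))^T) *m x
   = (((@Pm j))^T *m x)^T *m mxsub (@shift_ord N j) (@shift_ord N j) X *m (((@Pm j))^T *m x).
  by rewrite trmx_mul trmxK !mulmxA.
exact: hq.
Qed.

End S.

Lemma frobD (R : rcfType) N (A B X : 'M[R]_N) : frob (A + B) X = frob A X + frob B X.
Proof. by rewrite /frob mulmxDl mxtraceD. Qed.
Lemma frobZ (R : rcfType) N (a : R) (A X : 'M[R]_N) : frob (a *: A) X = a * frob A X.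
Proof. by rewrite /frob -scalemxAl mxtraceZ. Qed.

Ltac boolcases2 :=
  repeat match goal with
  | |- context [?x == ?y] => let H := fresh "H" in case: (x =P y) => H
  end.

Ltac fin := rewrite /= ?mulr0n ?mulr1n ?addr0 ?add0r ?mulr0 ?mulr1 //; try lia.

Section A.
Variable R : rcfType.
Variable n : nat.
Hypothesis hn : (1 < n)%N.
Local Notation N := n.+1.

Lemma EmxE_nat (a b : nat) : (a <= n)%N -> (b <= n)%N ->
  Emx R N a b = delta_mx (inord a) (inord b) + (a != b)%:R *: delta_mx (inord b) (inord a).
Proof.
move=> ha hb; have := @EmxE R N (inord a) (inord b).

by rewrite -val_eqE /= !inordK.
Qed.

Lemma AmxE (k : nat) (a b : 'I_N) : Amx R N k a b =
  if k == 0%N then (((a : nat) == 0%N) && ((b : nat) == 0%N))%:R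
  else (((a : nat) == k) && ((b : nat) == k))%:R +
       ((((a : nat) == k.-1) && ((b : nat) == n)) || (((a : nat) == n) && ((b : nat) == k.-1)))%:R.
Proof.
rewrite /Amx; case: ifP => _; rewrite !mxE ?orbb //.
Qed.

Lemma Amx_symE (k : nat) (a b : 'I_N) : Amx R N k b a = Amx R N k a b.
Proof.
rewrite !AmxE; case: ifP => _; boolcases2; fin.
Qed.

Variable c : 'I_n -> R.
Definition Ys := \sum_(k < n) c k *: Amx R N k.

Lemma YsE a b : Ys a b = \sum_(k < n) c k * Amx R N k a b.
Proof. by rewrite summxE; apply: eq_bigr => k _; rewrite mxE. Qed.

Lemma Ysym : Ys^T = Ys.
Proof.
apply/matrixP => a b; rewrite mxE !YsE; apply: eq_bigr => k _; by rewrite Amx_symE.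
Qed.

Lemma Y1 : Ys ord_max ord_max = 0.
Proof.
rewrite YsE; apply: big1 => k _; have := ltn_ord k => hk.
rewrite AmxE /=; boolcases2; fin.
Qed.

Lemma Y2 (k : 'I_n) : (0 < k)%N -> Ys (inord k.-1) ord_max = c k.
Proof.
move=> hk0; rewrite YsE (bigD1 k) //= big1 ?addr0.
  have := ltn_ord k => hk.
  rewrite AmxE inordK /=; last lia.
  boolcases2; fin.
move=> k' hk'; have := ltn_ord k => hk; have := ltn_ord k' => hk2.
have hne : (k' : nat) <> k by move=> e; move/eqP: hk'; apply; exact: val_inj.
rewrite AmxE inordK /=; last lia.
boolcases2; fin.
Qed.

Lemma Y3 (m : 'I_n) : Ys (inord m) (inord m) = c m.
Proof.
rewrite YsE (bigD1 m) //= big1 ?addr0.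
  have := ltn_ord m => hk.
  rewrite AmxE inordK /=; last lia.
  boolcases2; fin.
move=> k' hk'; have := ltn_ord m => hk; have := ltn_ord k' => hk2.
have hne : (k' : nat) <> m by move=> e; move/eqP: hk'; apply; exact: val_inj.
rewrite AmxE inordK /=; last lia.
boolcases2; fin.
Qed.

End A.

Section B.
Variable R : rcfType.
Variable n : nat.
Hypothesis hn : (1 < n)%N.
Local Notation N := n.+1.

Lemma frobA_le j (X : 'M[R]_N) (k : nat) : Zq j X -> (k <= j)%N -> (j < n)%N ->
  frob (Amx R N k) X = X (inord k) (inord k).
Proof.
move=> [hz _] hkj hjn; rewrite /Amx; case: ifP => [/eqP k0|k0].
  rewrite k0 EmxE_nat // frobD frobZ !frob_delta /= mul0r addr0 //.
have hk1 : (k.-1 < j)%N by case: k k0 hkj.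
have hk0 : (0 < k)%N by move: k0; case: (k).
move: hk1 hk0 => hk1 hk0.
rewrite !EmxE_nat //; try lia.
rewrite !frobD !frobZ !frob_delta eqxx /= mul0r addr0.
rewrite (hz (inord n)) ?(hz (inord k.-1)) ?mulr0 ?addr0 //; rewrite !inordK ?hk1 ?orbT //; lia.
Qed.

Lemma step j (K : 'M[R]_N -> Prop) Y : (j < n)%N -> (forall X, K X <-> Zq j X) ->
  in_linA Y -> dual_cone K Y -> ~ perp_cone K Y -> forall X, cap_perp K Y X <-> Zq j.+1 X.
Proof.
move=> hj hK [c ->] [_ hd] hnp.
have qY : forall u, vanish j u -> 0 <= (u^T *m Ys c *m u) 0 0.
  by move=> u hu; rewrite -frob_rank1; apply: hd; apply/hK; apply: Zq_rank1.
have ck0 : forall k : 'I_n, (j < k)%N -> c k = 0.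
  move=> k hk.
  have hk0 : (0 < k)%N by lia.
  rewrite -(Y2 hn c hk0).
  have h := @qform_zero R N (Ys c) j ord_max (inord k.-1) (Ysym c) qY.
  have := Ysym c; move/matrixP => /(_ ord_max (inord k.-1)); rewrite mxE => ->.
  have := ltn_ord k => hkn.
  apply: h; [exact: ltnW | rewrite -subn1 inordK; lia | exact: (Y1 hn c)].
pose jo : 'I_n := Ordinal hj.
have hjN : (j < N)%N by lia.
have frobY : forall X, Zq j X -> frob (Ys c) X = c jo * X (inord j) (inord j).
  move=> X hX; rewrite /Ys frob_sum (bigD1 jo) //= big1 ?addr0.
    by rewrite (frobA_le hX (leqnn j) hj).
  move=> k hk; case: (ltnP j k) => hjk; first by rewrite ck0 // mul0r.
  have hkj : (k < j)%N.
    rewrite ltn_neqAle hjk andbT; apply/negP => /eqP e; move/eqP: hk; apply.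
    exact: val_inj.
  rewrite (frobA_le hX (ltnW hkj) hj).
  case: hX => hz _; rewrite hz ?mulr0 //; rewrite inordK ?hkj //; lia.
have cj0 : 0 <= c jo.
  have hv : vanish j (@ev R N (inord j)).
    move=> a ha; rewrite !mxE.
    have -> : (a == inord j) = false.
      apply/negbTE/eqP => e; move: ha; rewrite e inordK //; lia.
    by [].
  have := qY _ hv; rewrite qdelta.
  have -> : (inord j : 'I_N) = inord jo by [].
  by rewrite (Y3 hn c jo).
have cjne : c jo != 0.
  apply/eqP => h; apply: hnp; split; first exact: (Ysym c).
  by move=> X /hK hX; rewrite frobY // h mul0r.
move=> X; split.
  move=> [/hK hX hf].
  have Xjj : X (inord j) (inord j) = 0.
    move: hf; rewrite frobY // => /eqP; rewrite mulf_eq0 (negbTE cjne) /= => /eqP.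
    done.
  have hX' := hX; case: hX' => hz [hs hq]; split; last by split.
  have hqv : forall u, vanish j u -> 0 <= (u^T *m X *m u) 0 0 by move=> u _; exact: hq.
  move=> k l hkl.
  case: (ltnP k j) => hk; first by rewrite hz ?hk.
  case: (ltnP l j) => hl; first by rewrite hz ?hl ?orbT.
  have hkl' : ((k : nat) = j) \/ ((l : nat) = j).
    by move: hkl; case/orP => h; [left | right]; lia.
  case: hkl' => e.
    have -> : k = inord j by apply/val_inj; rewrite /= inordK.
    apply: (qform_zero hs hqv) => //; by rewrite inordK.
  have -> : X k l = X l k by move/matrixP: hs => /(_ l k); rewrite mxE.
  have -> : l = inord j by apply/val_inj; rewrite /= inordK.
  apply: (qform_zero hs hqv) => //; by rewrite inordK.
move=> [hz hp].
have hX : Zq j X.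
  split => // k l h; apply: hz; case/orP: h => h; apply/orP; [left|right]; lia.
split; first exact/hK.
rewrite frobY // hz ?mulr0 //; rewrite inordK //; lia.
Qed.
End B.

Lemma main_ind (R : rcfType) n (hn : (1 < n)%N) (ys : seq 'M[R]_n.+1) :
  forall j (K : 'M[R]_n.+1 -> Prop), (forall X, K X <-> Zq j X) ->
  (j + size ys <= n)%N -> strict_fr_seq K ys ->
  (forall Y, Y \in ys -> in_linA Y) ->
  forall X, fr_face K ys X <-> Zq (j + size ys) X.
Proof.
elim: ys => [|Y ys IH] j K hK hsz hs hl X /=.
  by rewrite addn0.
case: hs => hd [hnp hs].
have hj : (j < n)%N by move: hsz => /=; lia.
have hK' := step hn hj hK (hl Y (mem_head _ _)) hd hnp.
rewrite -addSnnS; apply: IH => //.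
  by move: hsz => /=; lia.
by move=> Z hZ; apply: hl; rewrite in_cons hZ orbT.
Qed.

Unset Implicit Arguments.
Theorem claim1 (R : rcfType) (n : nat) (hn : (3 <= n)%N)
  (i : nat) (hi1 : (1 <= i)%N) (hi2 : (i <= n.-1.-1)%N)
  (Ys : seq 'M[R]_n) (hsize : size Ys = i)
  (hstrict : strict_fr_seq (@psd R n) Ys)
  (hlin : forall Y, Y \in Ys -> in_linA Y) :
  forall X : 'M[R]_n, fr_face (@psd R n) Ys X <-> zero_oplus_psd i X.
Proof.
case: n hn hi2 Ys hsize hstrict hlin => [//|n] hn hi2 ys hsize hstrict hlin X.
have hn' : (1 < n)%N by lia.
have h0 : forall X, psd X <-> Zq 0 X.
  by move=> Z; split; [move=> h; split | case].
rewrite -Zq_equiv -hsize -(add0n (size ys)).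
apply: main_ind => //.
by rewrite add0n hsize; move: hi2 => /=; lia.
Qed.
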